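(* Let $(X,m)$, $X=\{x_1,\ldots,x_n\}\subset\mathbb{R}^N$, be a central configuration with nonzero masses, exponent $a\neq0$, nonzero total mass $\mu_0$, and codimension $c$, and let $\lambda\in\mathbb{R}$ be such that $\sum_{i\neq j}m_iS_{ij}\overrightarrow{x_jx_i}=\overrightarrow{O}$ for all $j$, where $S_{ij}=s_{ij}^a-\lambda/\mu_0$ for $i\neq j$. Define $S_{jj}=-\frac{1}{m_j}\sum_{i\neq j}m_iS_{ij}$ and the vectors $C_j=(m_1S_{1j},\ldots,m_nS_{nj})\in\mathbb{R}^n$. Then for any $k,l\ge0$ with $k+l=c+1$, every $(c+1)\times(c+1)$ minor of any $n\times(c+1)$ matrix whose columns are $k$ of the vectors $C_j$ and $l$ vectors of $\mathbb{W}_0(X)$ vanishes. In particular, every $(c+1)\times(c+1)$ minor of the $n\times n$ matrix $(S_{ij})$ is zero.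
   Context: $s_{ij}=\overrightarrow{x_ix_j}^2$. A central configuration has accelerations $\overrightarrow{\gamma}_j=-\sum_{i\neq j}m_is_{ij}^a\overrightarrow{x_ix_j}$ such that, for some vector $\overrightarrow{\gamma}_O$, point $x_O$ and real $\lambda$, $\overrightarrow{\gamma}_j-\overrightarrow{\gamma}_O=\lambda\overrightarrow{x_Ox_j}$ for all $j$; for $\mu_0\neq0$ these equations take the form given in the claim. The codimension of $X$ is $(n-1)-d$ with $d$ the dimension of the affine hull of $X$. $\mathbb{W}_0(X)$ is the space of weight vectors $(w_i)$ with $\sum_iw_i\overrightarrow{px_i}=\overrightarrow{O}$ for all points $p$. *)

(* Defs.v *)
From HB Require Import structures.
From mathcomp Require Import all_boot all_order all_algebra.
From mathcomp Require Import reals exp.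
Set Implicit Arguments. Unset Strict Implicit. Unset Printing Implicit Defensive.
Import Order.TTheory GRing.Theory Num.Theory.
Local Open Scope ring_scope.

Section CC.
Variables (R : realType) (n N : nat).
Implicit Types (x : 'I_n -> 'rV[R]_N) (m : 'I_n -> R).

Definition sqd x (i j : 'I_n) : R := \sum_(k < N) (x j 0 k - x i 0 k) ^+ 2.

Definition mu0 m : R := \sum_(i < n) m i.

Definition accel m (a : R) x (j : 'I_n) : 'rV[R]_N :=
  - \sum_(i < n | i != j) (m i * (sqd x i j) `^ a) *: (x j - x i).

Definition central_config m (a : R) x : Prop :=
  exists (gO xO : 'rV[R]_N) (lam : R),
    forall j, accel m a x j - gO = lam *: (x j - xO).

Definition Soff m (a lam : R) x (i j : 'I_n) : R :=
  (sqd x i j) `^ a - lam / mu0 m.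

Definition Smat m (a lam : R) x : 'M[R]_n :=
  \matrix_(i, j) (if i == j then
                    - (m j)^-1 * \sum_(k < n | k != j) m k * Soff m a lam x k j
                  else Soff m a lam x i j).

Definition Cvec m (a lam : R) x (j : 'I_n) : 'cV[R]_n :=
  \col_i (m i * Smat m a lam x i j).

Definition inW0 x (w : 'cV[R]_n) : Prop :=
  forall p : 'rV[R]_N, \sum_(i < n) w i 0 *: (x i - p) = 0.

(* dimension of the affine hull = dimension of the span of all x_j - x_i *)
Definition affdim x : nat :=
  \dim (<< [seq x j - x i | i <- enum 'I_n, j <- enum 'I_n] >>%VS).

Definition codim x : nat := (n.-1 - affdim x)%N.

End CC.

(* Main.v *)
Require Import Defs.
From HB Require Import structures.
From mathcomp Require Import all_boot all_order all_algebra.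
From mathcomp Require Import reals exp.
From mathcomp Require Import zify.
Import Order.TTheory GRing.Theory Num.Theory.
Local Open Scope ring_scope.

Section Aux.
Variables (R : realType) (n N : nat) (x : 'I_n -> 'rV[R]_N).

Definition Xm : 'M[R]_(n, N) := \matrix_(i, k) x i 0 k.
Lemma rowXm i : row i Xm = x i.
Proof. by apply/rowP => k; rewrite !mxE. Qed.

Definition Gf : 'Hom('rV[R]_n, 'rV[R]_N) := linfun (mulmxr Xm).
Definition Sf : 'Hom('rV[R]_n, 'M[R]_(1, 1)) :=
  linfun (mulmxr (const_mx 1 : 'M[R]_(n, 1))).
Definition Wsp := (lker Sf :&: lker Gf)%VS.

Lemma GfE (w : 'rV[R]_n) : Gf w = \sum_i w 0 i *: x i.
Proof.
rewrite lfunE /= mulmx_sum_row; apply: eq_bigr => i _; congr (_ *: _).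
exact: rowXm.
Qed.

Lemma SfE (w : 'rV[R]_n) : Sf w = (\sum_i w 0 i)%:M.
Proof.
rewrite lfunE /=; apply/matrixP => i j; rewrite !ord1 !mxE.
by apply: eq_bigr => k _; rewrite !mxE mulr1.
Qed.

Lemma memW (w : 'rV[R]_n) :
  w \in Wsp <-> (\sum_i w 0 i = 0 /\ \sum_i w 0 i *: x i = 0).
Proof.
rewrite memv_cap !memv_ker GfE SfE.
split.
  by move=> /andP[/eqP h1 /eqP ->]; split => //; move/eqP: h1; move/eqP/matrixP/(_ 0 0); rewrite !mxE.
move=> [h1 h2]; apply/andP; split; apply/eqP; last exact: h2.
apply/matrixP => i j; rewrite !mxE; move: h1 => /= ->; by rewrite mul0rn.
Qed.

Lemma dimW : (0 < n)%N -> (\dim Wsp <= codim x)%N.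
Proof.
move=> hn; set i0 : 'I_n := Ordinal hn.
set Z := lker Sf.
have h1 := limg_ker_dim Sf fullv.
rewrite capfv dimvf /dim /= mul1n in h1.
have hS : (0 < \dim (Sf @: fullv))%N.
  rewrite lt0n dimv_eq0; apply/negP => /eqP h0.
  have : Sf 'e_i0 \in (Sf @: fullv)%VS by apply: memv_img; exact: memvf.
  rewrite h0 memv0 lfunE /= -rowE row_const.
  move/eqP/matrixP => /(_ 0 0); rewrite !mxE => /eqP; by rewrite oner_eq0.
have h2 := limg_ker_dim Gf Z.
have h3 : (<< [seq x j - x i | i <- enum 'I_n, j <- enum 'I_n] >>
            <= Gf @: Z)%VS.
  apply/span_subvP => v /allpairsP [[i j] [_ _ ->]] /=.
  have -> : x j - x i = Gf ('e_j - 'e_i).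
    by rewrite lfunE /= mulmxBl -!rowE !rowXm.
  apply: memv_img; rewrite memv_ker lfunE /= mulmxBl -!rowE !row_const.
  by rewrite subrr.
have h4 := dimvS h3.
rewrite /codim /affdim.
move: h1 h2 h4 hS; rewrite /Wsp -/Z.
set a := \dim _; set b := \dim _; set c := \dim _; set d := \dim _; set e := \dim _.
move=> h1 h2 h4 hS.
have : (n.-1 = n - 1)%N by lia.
lia.
Qed.

Lemma detW (c : nat) (M : 'M[R]_(n, c.+1)) (f : 'I_c.+1 -> 'I_n) :
  (\dim Wsp <= c)%N -> (forall q, (col q M)^T \in Wsp) ->
  \det (rowsub f M) = 0.
Proof.
move=> hd hM; apply/eqP; apply: contraT => hdet.
set X := [tuple (col q M)^T | q < c.+1].
have fr : free X.
  apply/freeP => k hk i.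
  set kc : 'cV[R]_c.+1 := \col_q k q.
  have hMk : M *m kc = 0.
    apply: trmx_inj; rewrite trmx_mul trmx0 mulmx_sum_row.
    transitivity (\sum_(q < c.+1) k q *: X`_q); last exact: hk.
    apply: eq_bigr => q _; rewrite nth_mktuple -tr_col; congr (_ *: _).
    by rewrite !mxE.
  have hA : rowsub f M \in unitmx by rewrite unitmxE unitfE.
  have : kc = 0.
    rewrite -(mulKmx hA kc) mul_rowsub_mx hMk.
    have -> : rowsub f (0 : 'M[R]_(n, 1)) = 0 by apply/matrixP => a b; rewrite !mxE.
    by rewrite mulmx0.
  by move/matrixP => /(_ i 0); rewrite !mxE.
have hs : (<<X>> <= Wsp)%VS.
  apply/span_subvP => v /tnthP [q ->]; by rewrite tnth_mktuple.
have := dimvS hs; rewrite (eqP fr) size_tuple; lia.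
Qed.

End Aux.

Theorem mainTheorem16 (R : realType) (n N : nat)
    (x : 'I_n -> 'rV[R]_N) (m : 'I_n -> R) (a lam : R) :
  (0 < N)%N ->
  injective x ->
  (forall i, m i != 0) ->
  a != 0 ->
  mu0 m != 0 ->
  central_config m a x ->
  (forall j : 'I_n,
     \sum_(i < n | i != j) (m i * Soff m a lam x i j) *: (x i - x j) = 0) ->
  (forall M : 'M[R]_(n, (codim x).+1),
     (forall q, (exists j, col q M = Cvec m a lam x j) \/ inW0 x (col q M)) ->
     forall f : 'I_(codim x).+1 -> 'I_n, injective f ->
       \det (rowsub f M) = 0)
  /\
  (forall f g : 'I_(codim x).+1 -> 'I_n, injective f -> injective g ->
     \det (mxsub f g (Smat m a lam x)) = 0).
Proof.
move=> hN _ hm _ _ _ hS.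
have P1 : forall M : 'M[R]_(n, (codim x).+1),
     (forall q, (exists j, col q M = Cvec m a lam x j) \/ inW0 x (col q M)) ->
     forall f : 'I_(codim x).+1 -> 'I_n, injective f ->
       \det (rowsub f M) = 0.
  move=> M hM f _.
  have hn : (0 < n)%N by case: (f ord0) => k; lia.
  apply: detW; first exact: dimW.
  move=> q; apply/memW.
  case: (hM q) => [[j ->] | hw].
  - set T := \sum_(k < n | k != j) m k * Soff m a lam x k j.
    have e1 : forall i, (Cvec m a lam x j)^T 0 i =
        if i == j then - T else m i * Soff m a lam x i j.
      move=> i; rewrite !mxE; case: eqP => [-> | _] //.
      by rewrite mulrA mulrN mulfV // mulN1r.
    split.
      rewrite (bigD1 j) //= e1 eqxx.
      under eq_bigr => i hi do rewrite e1 (negbTE hi).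
      by rewrite addrC subrr.
    rewrite (bigD1 j) //= e1 eqxx.
    under eq_bigr => i hi do rewrite e1 (negbTE hi).
    have h : \sum_(i < n | i != j) (m i * Soff m a lam x i j) *: x i = T *: x j.
      apply/eqP; rewrite -subr_eq0 /T scaler_suml -sumrB; apply/eqP.
      transitivity (\sum_(i < n | i != j) (m i * Soff m a lam x i j) *: (x i - x j)); last exact: hS j.
      apply: eq_bigr => i _; by rewrite scalerBr.
    by rewrite h scaleNr addNr.
  - have h0 : \sum_(i < n) col q M i 0 *: x i = 0.
      transitivity (\sum_(i < n) col q M i 0 *: (x i - 0)); last exact: hw 0.
      apply: eq_bigr => i _; by rewrite subr0.
    have h1 : - ((\sum_(i < n) col q M i 0) *: (const_mx 1 : 'rV[R]_N)) = 0.
      transitivity (\sum_(i < n) col q M i 0 *: (x i - const_mx 1)); last exact: hw (const_mx 1).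
      rewrite [in RHS](eq_bigr _ (fun i _ => scalerBr _ _ _)) sumrB h0 sub0r.
      by rewrite scaler_suml.
    have e : forall i, (col q M)^T 0 i = col q M i 0 by move=> i; rewrite !mxE.
    split; last first.
      transitivity (\sum_(i < n) col q M i 0 *: x i); last exact: h0.
      apply: eq_bigr => i _; by rewrite e.
    transitivity (\sum_(i < n) col q M i 0).
      apply: eq_bigr => i _; by rewrite e.
    move/eqP: h1; rewrite oppr_eq0 => /eqP /matrixP /(_ 0 (Ordinal hN)).
    by rewrite !mxE mulr1.
split => // f g hf hg.
set M : 'M[R]_(n, (codim x).+1) := \matrix_(i, q) (m i * Smat m a lam x i (g q)).
have hM := P1 M.
have e : rowsub f M = diag_mx (\row_p m (f p)) *m mxsub f g (Smat m a lam x).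
  by rewrite mul_diag_mx; apply/matrixP => i j; rewrite !mxE.
have hcol : forall q, col q M = Cvec m a lam x (g q).
  by move=> q; apply/colP => i; rewrite !mxE.
have h0 := hM (fun q => or_introl (ex_intro _ (g q) (hcol q))) f hf.
rewrite e det_mulmx det_diag in h0.
move/eqP: h0; rewrite mulf_eq0 => /orP [hp | /eqP //].
exfalso; move: hp; apply/negP/prodf_neq0 => i _; rewrite mxE; exact: hm.
Qed.
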